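(* Let $K$ be a field, $c\in K\setminus\{0\}$, $n\ge1$, and let $f,g$ be $c$-friezes of order $n$ over $K$. If there is $a\in\mathbb{Z}$ such that $f(a+m,a+m)=g(a+m,a+m)$ for $m=0,1,\dots,n+2$ (i.e. $f$ and $g$ agree on $n+3$ consecutive elements of the first row), then $f=g$.
   Context: The $c$-continuant polynomials $P_k=P_k^c$ ($k\ge-1$) are defined by $P_{-1}=0$, $P_0=1$, and for $k\ge1$, $P_k(x_1,\dots,x_k)=x_kP_{k-1}(x_1,\dots,x_{k-1})+cP_{k-2}(x_1,\dots,x_{k-2})$. A family $(x_i)_{i\in\mathbb{Z}}$ in $K$ is $n$-admissible if $P_{n+2}(x_i,\dots,x_{i+n+1})=0$ for all $i$. Let $\mathbb{B}_n=\{(i,j)\in\mathbb{Z}^2:-2\le j-i\le n+1\}$. A $c$-frieze of order $n$ is a function $f:\mathbb{B}_n\to K$ for which there is an $n$-admissible family $(x_i)$ with $f(i,j)=P_{j-i+1}(x_i,\dots,x_j)$ for all $(i,j)\in\mathbb{B}_n$; its first row consists of the values $f(i,i)=x_i$. *)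

(* Defs.v *)
From mathcomp Require Import all_boot all_algebra.
Set Implicit Arguments. Unset Strict Implicit. Unset Printing Implicit Defensive.
Import GRing.Theory.
Local Open Scope ring_scope.

(* cont c x i k = P_k^c (x_i, x_{i+1}, ..., x_{i+k-1}) for k : nat,
   following P_0 = 1, P_{-1} = 0, P_k = x_k P_{k-1} + c P_{k-2}. *)
Fixpoint cont_aux (K : fieldType) (c : K) (x : int -> K) (i : int) (k : nat)
  : K * K :=
  (* returns (P_k, P_{k-1}) *)
  match k with
  | O => (1, 0)
  | S k' => let p := cont_aux c x i k' in
            (x (i + k'%:Z)%R * p.1 + c * p.2, p.1)
  end.

Definition cont (K : fieldType) (c : K) (x : int -> K) (i : int) (k : nat) : K :=
  (cont_aux c x i k).1.

(* P_{j-i+1}(x_i,...,x_j) for an integer length j-i+1 >= -1; length -1 gives P_{-1}=0. *)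
Definition contZ (K : fieldType) (c : K) (x : int -> K) (i j : int) : K :=
  match (j - i + 1)%R with
  | Posz k => cont c x i k
  | Negz _ => 0
  end.

Definition admissible (K : fieldType) (c : K) (n : nat) (x : int -> K) : Prop :=
  forall i : int, cont c x i n.+2 = 0.

Definition inB (n : nat) (i j : int) : bool :=
  ((-2 : int) <= j - i) && (j - i <= (n.+1)%:Z).

(* A c-frieze of order n: a function on B_n (represented as a function on
   int * int, only its values on B_n being relevant) arising from an
   n-admissible family. *)
Definition is_frieze (K : fieldType) (c : K) (n : nat) (f : int -> int -> K) : Prop :=
  exists x : int -> K, admissible c n x /\
    forall i j : int, inB n i j -> f i j = contZ c x i j.

(* Main.v *)
Require Import Defs.
From mathcomp Require Import all_boot all_algebra.
From mathcomp Require Import zify ring.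
Import GRing.Theory.
Local Open Scope ring_scope.

Section S.
Variables (K : fieldType) (c : K).

Lemma contR (x : int -> K) i k :
  cont c x i k.+2 = x (i + k.+1%:Z) * cont c x i k.+1 + c * cont c x i k.
Proof. by rewrite /cont /=. Qed.

Lemma cont0 x i : cont c x i 0 = 1. Proof. by []. Qed.
Lemma cont1 x i : cont c x i 1 = x i.
Proof. by rewrite /cont /= addr0 mulr1 mulr0 addr0. Qed.

Lemma contL_aux (x : int -> K) k : forall i,
  cont c x i k.+2 = x i * cont c x (i+1) k.+1 + c * cont c x (i+2) k /\
  cont c x i k.+3 = x i * cont c x (i+1) k.+2 + c * cont c x (i+2) k.+1.
Proof.
elim: k => [|k IH] i.
  have e1 : x (i + 1%:Z) = x (i+1) by [].
  have e2 : x (i + 2%:Z) = x ((i+1) + 1%:Z) by congr x; lia.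
  have e3 : x (i + 2%:Z) = x (i+2) by congr x; lia.
  rewrite !contR !cont1 !cont0 /= -e2 e3 e1; split; ring.
split; first by case: (IH i).
have [A B] := IH i.
have [A1 B1] := IH (i+1).
rewrite [cont c x i k.+4]contR B A.
rewrite [cont c x (i+1) k.+3]contR [cont c x (i+2) k.+2]contR.
have e1 : x (i + k.+3%:Z) = x (i + 1 + k.+2%:Z) by congr x; lia.
have e2 : x (i + k.+3%:Z) = x (i + 2 + k.+1%:Z) by congr x; lia.
rewrite -e1 -e2; ring.
Qed.

Lemma contL x i k :
  cont c x i k.+2 = x i * cont c x (i+1) k.+1 + c * cont c x (i+2) k.
Proof. by case: (contL_aux x k i). Qed.

Lemma cont_ext (x y : int -> K) i k :
  (forall t : nat, (t < k)%N -> x (i + t%:Z) = y (i + t%:Z)) ->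
  cont_aux c x i k = cont_aux c y i k.
Proof.
elim: k => [|k IH] H //=.
rewrite IH ?H //; move=> t Ht; apply: H; lia.
Qed.

Lemma cassini x i k :
  cont c x i k.+1 * cont c x (i+1) k.+1 - cont c x i k.+2 * cont c x (i+1) k
  = (- c) ^+ k.+1.
Proof.
elim: k => [|k IH].
  rewrite contR !cont1 !cont0.
  have e : x (i + 1%:Z) = x (i+1) by [].
  rewrite e expr1; ring.
rewrite [cont c x i k.+3]contR [cont c x (i+1) k.+2]contR.
have e : x (i + 1 + k.+1%:Z) = x (i + k.+2%:Z) by congr x; lia.
rewrite e exprS -IH; ring.
Qed.
End S.

Lemma solve1 (K : fieldType) (u u' P v : K) :
  P != 0 -> u * P + v = 0 -> u' * P + v = 0 -> u = u'.
Proof.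
move=> HP h1 h2; apply: (mulIf HP); apply/eqP.
by rewrite -(inj_eq (addIr v)) h1 h2.
Qed.

Lemma contZ_ext (K : fieldType) (c : K) x y i j :
  (forall z, x z = y z) -> contZ c x i j = contZ c y i j.
Proof.
move=> H; rewrite /contZ; case: (j - i + 1) => // k.
by rewrite /cont (@cont_ext _ _ x y).
Qed.

Theorem mainTheorem12 (K : fieldType) (c : K) (n : nat) (f g : int -> int -> K) :
  c != 0 -> (1 <= n)%N ->
  is_frieze c n f -> is_frieze c n g ->
  (exists a : int, forall m : nat, (m <= n.+2)%N ->
      f (a + m%:Z) (a + m%:Z) = g (a + m%:Z) (a + m%:Z)) ->
  forall i j : int, inB n i j -> f i j = g i j.
Proof.
move=> c0 n1 [x [Hx Hf]] [y [Hy Hg]] [a Ha].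
have diag : forall (h : int -> int -> K) w, (forall i j, inB n i j -> h i j = contZ c w i j) ->
   forall z, h z z = w z.
  move=> h w Hh z; rewrite Hh; last by rewrite /inB subrr.
  by rewrite /contZ subrr add0r; exact: cont1.
have nz : forall w, admissible c n w -> forall i, cont c w i n.+1 != 0 /\ cont c w (i+1) n.+1 != 0.
  move=> w Hw i; have := @cassini _ c w i n; rewrite Hw mul0r subr0 => e.
  have : (- c) ^+ n.+1 != 0 by rewrite expf_neq0 // oppr_eq0.
  by rewrite -e mulf_eq0 negb_or => /andP.
have agree : forall m : nat, forall z, a - m%:Z <= z <= a + (n.+2 + m)%N%:Z -> x z = y z.
  elim=> [|m IH] z.
    rewrite subr0 => /andP[h1 h2].
    have -> : z = a + (`|z - a|%N)%:Z by lia.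
    rewrite -(diag _ _ Hf) -(diag _ _ Hg) Ha //; lia.
  move=> /andP[h1 h2].
  have [hin|hout] := boolP (a - m%:Z <= z <= a + (n.+2 + m)%N%:Z); first exact: IH.
  have ext : forall i k, (forall t : nat, (t < k)%N -> a - m%:Z <= i + t%:Z <= a + (n.+2 + m)%N%:Z) ->
      cont c x i k = cont c y i k.
    by move=> i k Hi; rewrite /cont (@cont_ext _ _ x y) // => t /Hi /IH.
  have [ez|ez] : z = a + (n.+3 + m)%N%:Z \/ z = a - m.+1%:Z by lia.
    set i := a + (m.+2)%:Z.
    have ezi : z = i + n.+1%:Z by rewrite ez /i; lia.
    have e1 := Hx i; have e2 := Hy i.
    rewrite contR -ezi in e1; rewrite contR -ezi in e2.
    rewrite -(ext i n.+1) in e2; last by move=> t Ht; rewrite /i; lia.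
    rewrite -(ext i n) in e2; last by move=> t Ht; rewrite /i; lia.
    by apply: (@solve1 _ _ _ _ _ _ e1 e2); case: (nz x Hx i).
  have e1 := Hx z; have e2 := Hy z.
  rewrite contL in e1; rewrite contL in e2.
  rewrite -(ext (z+1) n.+1) in e2; last by move=> t Ht; lia.
  rewrite -(ext (z+2) n) in e2; last by move=> t Ht; lia.
  by apply: (@solve1 _ _ _ _ _ _ e1 e2); case: (nz x Hx z).
have all : forall z, x z = y z.
  move=> z; apply: (agree `|z - a|%N); lia.
move=> i j hij; rewrite Hf // Hg //; exact: contZ_ext.
Qed.
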